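(* Let $N\ge 3$ and let $A=(A_n)_{n\in\mathbb{Z}_{2N}}\in\mathbb{R}^{2N}$ satisfy $\sum_{l=1}^N A_{2l}<\sum_{l=1}^N A_{2l-1}$. Define $\bar A=(\bar A_n)_{n\in\mathbb{Z}_{2N}}$ by, for each $n\in\mathbb{Z}_N$ (indices modulo $2N$), $$\bar A_{2n}=\min\Big(A_{2n+1},\ A_{2n}-\min_{0\le k\le N-1}\sum_{l=1}^{k}\big(A_{2(n-l)+1}-A_{2(n-l)}\big)\Big),\qquad \bar A_{2n+1}=A_{2n+1}+A_{2n+2}-\bar A_{2n}$$ (the empty sum for $k=0$ being $0$). For $1\le k\le N$ let $$H_k(A)=\min_{\substack{1\le i_1\triangleleft i_2\triangleleft\cdots\triangleleft i_k\le 2N\\ (i_1,i_k)\neq(1,2N)}}\big(A_{i_1}+\cdots+A_{i_k}\big),$$ and $H_{N+1}(A)=\sum_{i=1}^{2N}A_i$. Then $H_k(\bar A)=H_k(A)$ for all $1\le k\le N+1$.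
   Context: For integers $i,j$, $i\triangleleft j$ means $i+1<j$. The minimum in $H_k$ runs over index tuples $1\le i_1<\dots<i_k\le 2N$ with consecutive indices differing by at least $2$, excluding tuples with $i_1=1$ and $i_k=2N$ simultaneously. The map $A\mapsto\bar A$ is the time evolution of the tropical periodic Toda lattice on the phase space $\{A\in\mathbb{R}^{2N}:\sum_{l}A_{2l}<\sum_l A_{2l-1}\}$. *)

(* Defs.v *)
From HB Require Import structures.
From mathcomp Require Import all_boot all_order all_algebra.
Set Implicit Arguments. Unset Strict Implicit. Unset Printing Implicit Defensive.
Import Order.TTheory GRing.Theory Num.Theory.
Local Open Scope ring_scope.

Section Toda.
Variable R : realFieldType.

(* Minimum of a (nonempty) finite list; the value on [::] is irrelevant
   (only used on nonempty lists). *)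
Definition seqmin (s : seq R) : R :=
  if s is x :: s' then foldr Num.min x s' else 0.

(* A point of R^{2N}: A : 'I_(2N) -> R, where the ordinal j stores A_j,
   indices being read modulo 2N (so A_{2N} is stored at j = 0). *)
Definition Aat (N : nat) (A : 'I_(2*N) -> R) (i : nat) : R :=
  if insub (i %% (2*N))%N is Some j then A j else 0.

(* S_k = sum_{l=1}^k (A_{2(n-l)+1} - A_{2(n-l)}), for 0 <= k <= N-1;
   n - l is represented as n + N - l (mod N) which is a positive nat here. *)
Definition Spart (N : nat) (A : 'I_(2*N) -> R) (n k : nat) : R :=
  \sum_(1 <= l < k.+1)
     (Aat A (2 * (n + N - l)).+1 - Aat A (2 * (n + N - l))).

Definition Abar_even (N : nat) (A : 'I_(2*N) -> R) (n : nat) : R :=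
  Num.min (Aat A (2 * n).+1)
          (Aat A (2 * n) - seqmin [seq Spart A n k | k <- iota 0 N]).

Definition Abar (N : nat) (A : 'I_(2*N) -> R) : 'I_(2*N) -> R :=
  fun j => let n := (val j)./2 in
    if odd (val j) then
      Aat A (2 * n).+1 + Aat A (2 * n).+2 - Abar_even A n
    else Abar_even A n.

(* admissible index tuples, stored 0-based: a position a stands for i = a+1.
   Conditions: i_1 <| i_2 <| ... <| i_k (i.e. i_{j}+1 < i_{j+1}) and
   (i_1, i_k) <> (1, 2N). *)
Definition admissible (N k : nat) (t : k.-tuple 'I_(2*N)) : bool :=
  let s := map val (tval t) in
  sorted (fun a b : nat => (a.+1 < b)%N) s &&
  ~~ ((head 0%N s == 0%N) && (last 0%N s == (2 * N).-1)).

Definition H (N : nat) (A : 'I_(2*N) -> R) (k : nat) : R :=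
  if k == N.+1 then \sum_(j < 2 * N) A j
  else seqmin [seq \sum_(j <- tval t) Aat A (val j).+1
              | t <- enum [pred t : k.-tuple 'I_(2*N) | admissible t]].

End Toda.

(* Main.v *)
Require Import Defs.
From HB Require Import structures.
From mathcomp Require Import all_boot all_order all_algebra.
From mathcomp Require Import lra zify.
Set Implicit Arguments. Unset Strict Implicit. Unset Printing Implicit Defensive.
Set Warnings "-redundant-canonical-projection -notation-overridden -ambiguous-paths".
Import Order.TTheory GRing.Theory Num.Theory.
Local Open Scope ring_scope.

Section Trop.
Variable R : realFieldType.
Definition trop := option R.
HB.instance Definition _ := Choice.on trop.
Definition tadd (x y : trop) : trop :=
  match x, y with
  | None, _ => y | _, None => x | Some a, Some b => Some (Num.min a b) end.
Definition tmul (x y : trop) : trop :=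
  match x, y with
  | Some a, Some b => Some (a + b) | _, _ => None end.
Lemma taddA : associative tadd.
Proof. by case=> [a|] [b|] [c|] //=; rewrite minA. Qed.
Lemma taddC : commutative tadd.
Proof. by case=> [a|] [b|] //=; rewrite minC. Qed.
Lemma tadd0 : left_id (None : trop) tadd.
Proof. by case. Qed.
HB.instance Definition _ := GRing.isNmodule.Build trop taddA taddC tadd0.
Lemma tmulA : associative tmul.
Proof. by case=> [a|] [b|] [c|] //=; rewrite addrA. Qed.
Lemma tmulC : commutative tmul.
Proof. by case=> [a|] [b|] //=; rewrite addrC. Qed.
Lemma tmul1 : left_id (Some 0 : trop) tmul.
Proof. by case=> //= a; rewrite add0r. Qed.
Lemma tmulDl : left_distributive tmul tadd.
Proof. by case=> [a|] [b|] [c|] //=; rewrite addr_minl. Qed.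
Lemma tmul0 : left_zero (None : trop) tmul.
Proof. by case. Qed.
Lemma tone_neq0 : (Some 0 : trop) != None. Proof. by []. Qed.
HB.instance Definition _ := GRing.Nmodule_isComNzSemiRing.Build trop
  tmulA tmulC tmul1 tmulDl tmul0 tone_neq0.

Lemma tropD (a b : R) : (Some a : trop) + Some b = Some (Num.min a b).
Proof. by []. Qed.
Lemma tropM (a b : R) : (Some a : trop) * Some b = Some (a + b).
Proof. by []. Qed.

Notation P := {poly trop}.
Definition mono (c : R) : P := (Some c : trop)%:P * 'X.

Lemma monoD a b : mono a + mono b = mono (Num.min a b).
Proof. by rewrite /mono -mulrDl -polyCD. Qed.
Lemma monoM a b : mono a * mono b = (Some (a + b) : trop)%:P * 'X^2.
Proof. by rewrite /mono mulrACA -polyCM expr2. Qed.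

Definition le_at (p : P) (k : nat) (r : R) : bool :=
  if p`_k is Some v then v <= r else false.

Lemma le_atD p q k r : le_at (p + q) k r = le_at p k r || le_at q k r.
Proof.
rewrite /le_at coefD; case: (p`_k) => [a|]; case: (q`_k) => [b|] //=.
  by rewrite ge_min.
by rewrite orbF.
Qed.

Lemma le_at_mono p c k r :
  le_at (p * mono c) k r = if k is k'.+1 then le_at p k' (r - c) else false.
Proof.
rewrite /le_at /mono mulrA coefMX; case: k => //= k.
rewrite coefMC; case: (p`_k) => //= v.
by rewrite /= lerBrDr.
Qed.

Lemma le_at1 k r : le_at 1 k r = (k == 0)%N && (0 <= r).
Proof. by rewrite /le_at coefE; case: k. Qed.
Lemma le_at0 k r : le_at 0 k r = false.
Proof. by rewrite /le_at coefE. Qed.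

Definition o0 : 'I_2 := ord0.
Definition o1 : 'I_2 := ord_max.

Lemma mul2E (A B : 'M[P]_2) i j : (A *m B) i j = A i o0 * B o0 j + A i o1 * B o1 j.
Proof.
rewrite mxE !big_ord_recl big_ord0 addr0.
by have -> : lift ord0 ord0 = o1 :> 'I_2 by apply: val_inj.
Qed.

Lemma ord2P (i : 'I_2) : i = o0 \/ i = o1.
Proof. case: i => m Hm; case: m Hm => [|[|m]] Hm //; [left|right]; exact: val_inj. Qed.

Definition Mc (c : R) : 'M[P]_2 :=
  \matrix_(i < 2, j < 2)
    (if val i == 0%N then (if val j == 0%N then 1 else mono c)
     else (if val j == 0%N then 1 else 0)).
Definition Kv (v : R) : 'M[P]_2 :=
  \matrix_(i < 2, j < 2)
    (if val i == 0%N then (if val j == 0%N then 1 else mono v)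
     else (if val j == 0%N then 0 else 1)).

Lemma minrEle (x y : R) : Num.min x y = if x <= y then x else y.
Proof.
rewrite /Num.min /=; case: ltP => h; first by rewrite ltW.
by case: leP => // h2; apply/le_anti; rewrite h h2.
Qed.

Lemma realF1 (a b w a' : R) :
  Num.min (a' + (a + w - Num.min b (a + w))) (b + a' - Num.min b (a + w)) = a'.
Proof.
rewrite !minrEle; case: (leP b (a + w)) => h;
rewrite ?minrEle; case: leP => h2; lra.
Qed.

Lemma local_id a b w a' :
  let ab := Num.min b (a + w) in
  Kv (a + w) *m (Mc b *m Mc a') =
  (Mc ab *m Mc (b + a' - ab)) *m Kv (a' + (a + w - ab)).
Proof.
move=> ab; apply/matrixP => i j.
rewrite !mul2E.
case: (ord2P i) => ->; case: (ord2P j) => -> /=; rewrite ?mul2E !mxE /=;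
  rewrite !(mul0r, mulr0, mul1r, mulr1, addr0, add0r).
- by rewrite -addrA monoD.
- rewrite mulrDl mul1r -addrA [X in _ = _ + X]addrC addrA monoD realF1.
  rewrite !monoM; congr (_ + (Some _ : trop)%:P * _); rewrite /ab; lra.
- by [].
- by rewrite monoD realF1.
Qed.

Fixpoint mprod (F : nat -> 'M[P]_2) (m : nat) : 'M[P]_2 :=
  if m is m'.+1 then mprod F m' *m F m' else 1%:M.

Lemma telescope (K F G : nat -> 'M[P]_2) m :
  (forall n, (n < m)%N -> K n *m F n = G n *m K n.+1) ->
  K 0%N *m mprod F m = mprod G m *m K m.
Proof.
elim: m => [|m IH] H /=; first by rewrite mul1mx mulmx1.
rewrite mulmxA IH; last by move=> n hn; apply: H; apply: ltnW.
by rewrite -mulmxA H // mulmxA.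
Qed.

Lemma mprod_pair F m :
  mprod (fun n => F (2 * n)%N *m F (2 * n).+1) m = mprod F (2 * m).
Proof.
elim: m => [|m IH]; first by [].
have E: (2 * m.+1 = (2 * m).+2)%N by rewrite mulnS.
rewrite E.
transitivity (mprod (fun n => F (2 * n)%N *m F (2 * n).+1) m *m
   (F (2 * m)%N *m F (2 * m).+1)); first by [].
by rewrite IH mulmxA.
Qed.

Lemma mprod_shift F m : mprod F m.+1 = F 0%N *m mprod (fun i => F i.+1) m.
Proof.
elim: m => [|m IH]; first by rewrite /= mul1mx mulmx1.
change (mprod F m.+1 *m F m.+1 = F 0%N *m (mprod (fun i => F i.+1) m *m F m.+1)).
by rewrite IH mulmxA.
Qed.

Lemma tr_rot F m : F m = F 0%N ->
  \tr (mprod F m) = \tr (mprod (fun i => F i.+1) m).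
Proof.
case: m => [|m] // H.
by rewrite mprod_shift mxtrace_mulC /= H.
Qed.

Lemma tr2 (A : 'M[P]_2) : \tr A = A o0 o0 + A o1 o1.
Proof.
rewrite /mxtrace !big_ord_recl big_ord0 addr0.
by have -> : lift ord0 ord0 = o1 :> 'I_2 by apply: val_inj.
Qed.

Lemma tr_intertwine v (X X' : 'M[P]_2) :
  Kv v *m X = X' *m Kv v -> \tr X = \tr X'.
Proof.
move/matrixP=> H.
have h00 := H o0 o0; have h10 := H o1 o0; have h11 := H o1 o1.
rewrite !mul2E !mxE /= in h00 h10 h11.
rewrite !(mul0r, mulr0, mul1r, mulr1, addr0, add0r) in h00 h10 h11.
by rewrite !tr2 -h00 h11 h10 -addrA [X' o1 o0 * _]mulrC.
Qed.
Definition indep (m : nat) (b : nat -> bool) :=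
  forall i, (i.+1 < m)%N -> ~~ (b i && b i.+1).
Definition cnt (b : nat -> bool) m := count b (iota 0 m).
Definition sm (g : nat -> R) (b : nat -> bool) m := \sum_(i <- iota 0 m | b i) g i.
Definition Ex (g : nat -> R) m (x y : bool) k r := exists b : nat -> bool,
  [/\ indep m b, (x -> ~~ b 0%N), y = (if m is m'.+1 then b m' else x),
      cnt b m = k & sm g b m <= r].

Lemma cntS b m : cnt b m.+1 = (cnt b m + b m)%N.
Proof. by rewrite /cnt -addn1 iotaD count_cat /= addn0. Qed.
Lemma smS g b m : sm g b m.+1 = sm g b m + (if b m then g m else 0).
Proof. by rewrite /sm -addn1 iotaD big_cat /= big_cons big_nil; case: (b m); rewrite ?addr0. Qed.
Lemma cnt_ext b b' m : (forall i, (i < m)%N -> b i = b' i) -> cnt b m = cnt b' m.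
Proof. by move=> H; apply: eq_in_count => i; rewrite mem_iota add0n => /H. Qed.
Lemma sm_ext g b b' m : (forall i, (i < m)%N -> b i = b' i) -> sm g b m = sm g b' m.
Proof.
move=> H; rewrite /sm !(big_mkcond (fun i => b _)) !(big_mkcond (fun i => b' _)).
by apply: eq_big_seq => i; rewrite mem_iota add0n => /H ->.
Qed.

Lemma Ex_step0 g m x k r :
  Ex g m.+1 x false k r <-> (Ex g m x false k r \/ Ex g m x true k r).
Proof.
split.
  case=> b [hi hx hy hc hs].
  have hi' : indep m b by move=> i hi1; apply: hi; apply: ltnW.
  have hc' : cnt b m = k by rewrite -hc cntS -hy addn0.
  have hs' : sm g b m <= r by rewrite -(addr0 (sm g b m)); move: hs; rewrite smS -hy.
  set y' := (if m is m'.+1 then b m' else x).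
  case: (boolP y') => hy'.
    by right; exists b; split.
  by left; exists b; split => //; apply/esym/negbTE.
move=> H.
have [y [b [hi hx hy hc hs]]] : exists y, Ex g m x y k r.
  by case: H => H; eexists; exact: H.
exists (fun i => if i == m then false else b i); split.
- move=> i hi1; case: eqP => [->|hne]; first by rewrite andFb.
  case: eqP => [_|hne2]; first by rewrite andbF.
  have hlt : (i.+1 < m)%N by move: hi1; rewrite ltnS leq_eqVlt => /orP [/eqP E|] //.
  exact: hi.
- by case: eqP => // _; exact: hx.
- by rewrite eqxx.
- rewrite cntS eqxx addn0 -hc; apply: cnt_ext => i hi1.
  by rewrite (ltn_eqF hi1).
- rewrite smS eqxx addr0 (@sm_ext g _ b m) //.
  by move=> i hi1; rewrite (ltn_eqF hi1).
Qed.

Lemma Ex_step1 g m x k r :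
  Ex g m.+1 x true k r <->
  (if k is k'.+1 then Ex g m x false k' (r - g m) else False).
Proof.
split.
  case=> b [hi hx hy hc hs].
  rewrite -hc cntS -hy addn1.
  exists b; split => //.
  - by move=> i hi1; apply: hi; apply: ltnW.
  - case: m hi hx hy hc hs => [|m] hi hx hy hc hs.
      by case: x hx => // /(_ isT); rewrite -hy.
    have := hi m (ltnSn _); rewrite -hy andbT.
    by move/negbTE.
  - by move: hs; rewrite smS -hy lerBrDr.
case: k => // k [b [hi hx hy hc hs]].
exists (fun i => if i == m then true else b i); split.
- move=> i hi1; case: eqP => [E|hne].
    by move: hi1; rewrite E ltnn.
  case: eqP => [E|hne2]; last first.
    apply: hi; move: hi1; rewrite ltnS leq_eqVlt => /orP [/eqP E|//].
    by exfalso; apply: hne2.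
  rewrite andbT; case: m E hi hx hy hc hs hne hi1 => // m [E] hi hx hy hc hs hne _.
  by rewrite E -hy.
- case: eqP => [E|_]; last exact: hx.
  by case: m E hi hx hy hc hs => // _ hi hx hy; rewrite -hy.
- by rewrite eqxx.
- rewrite cntS eqxx addn1 -hc; congr S; apply: cnt_ext => i hi1.
  by rewrite (ltn_eqF hi1).
- rewrite smS eqxx (@sm_ext g _ b m); first by rewrite -lerBrDr.
  by move=> i hi1; rewrite (ltn_eqF hi1).
Qed.

Lemma Ex0 g x y k r : Ex g 0 x y k r <-> [/\ y = x, k = 0%N & 0 <= r].
Proof.
split.
  by case=> b [_ _ -> <-]; rewrite /sm big_nil.
case=> -> -> hr; exists (fun _ => false); split => //.
by rewrite /sm big_nil.
Qed.

Lemma dp g m (i j : 'I_2) k r :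
  le_at (mprod (fun n => Mc (g n)) m i j) k r <->
  Ex g m (val i == 1%N) (val j == 1%N) k r.
Proof.
elim: m i j k r => [|m IH] i j k r.
  rewrite Ex0 /= mxE.
  case: (ord2P i) => ->; case: (ord2P j) => -> /=;
    rewrite ?le_at1 ?le_at0.
  - by split; [move/andP=> [/eqP -> ->] | case=> _ -> ->].
  - by split => //; case.
  - by split => //; case.
  - by split; [move/andP=> [/eqP -> ->] | case=> _ -> ->].
change (le_at ((mprod (fun n => Mc (g n)) m *m Mc (g m)) i j) k r <->
   Ex g m.+1 (val i == 1%N) (val j == 1%N) k r).
rewrite mul2E !mxE.
case: (ord2P j) => -> /=.
  rewrite !mulr1 le_atD Ex_step0.
  have h0 := IH i o0 k r; have h1 := IH i o1 k r.
  split.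
    by case/orP => [/h0 H|/h1 H]; [left|right].
  by case => [/h0 ->|/h1 ->] //; rewrite orbT.
rewrite mulr0 addr0 le_at_mono Ex_step1.
by case: k => // k; exact: (IH i o0 k (r - g m)).
Qed.
End Trop.

Definition gap (a b : nat) : bool := (a.+1 < b)%N.
Lemma gap_trans : transitive gap.
Proof. by move=> b a c; rewrite /gap => h1 h2; apply: ltn_trans h2; apply: ltn_trans h1 _. Qed.
Lemma gap_irr : irreflexive gap.
Proof. by move=> a; rewrite /gap ltnNge leqnSn. Qed.

Lemma pairwise_mem2 (s : seq nat) x y : pairwise gap s -> x \in s -> y \in s ->
  x != y -> gap x y || gap y x.
Proof.
elim: s => //= a s IH /andP [ha hs].
rewrite !inE => /orP [/eqP ->|hx] /orP [/eqP ->|hy]; rewrite ?eqxx //.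
- by move=> _; rewrite (allP ha y hy).
- by move=> _; rewrite (allP ha x hx) orbT.
- exact: IH.
Qed.

Lemma pairwise_head (s : seq nat) : pairwise gap s -> 0%N \in s -> head 0%N s = 0%N.
Proof.
case: s => //= a s /andP [ha _]; rewrite inE => /orP [/eqP -> //|h].
by have := allP ha _ h.
Qed.

Lemma pairwise_last (s : seq nat) m : pairwise gap s -> all (fun x => x < m.+1)%N s ->
  m \in s -> last 0%N s = m.
Proof.
case/lastP: s => //= s z; rewrite last_rcons -cats1 pairwise_cat all_cat /=.
case/and3P=> hr _ _ /andP [_] /andP [hz _].
rewrite mem_cat inE => /orP [h|/eqP -> //].
move: hr; rewrite allrel1r => /allP /(_ _ h); rewrite /gap => h2.
by move: (ltn_trans h2 hz); rewrite ltnS ltnn.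
Qed.

Lemma indep_pairwise m (b : nat -> bool) :
  (forall i, (i.+1 < m)%N -> ~~ (b i && b i.+1)) -> pairwise gap (filter b (iota 0 m)).
Proof.
elim: m => [|m IH] H //.
rewrite -addn1 iotaD filter_cat pairwise_cat /=.
have H' : forall i, (i.+1 < m)%N -> ~~ (b i && b i.+1).
  by move=> i hi; apply: H; apply: leqW.
rewrite IH // add0n.
case hb: (b m) => /=; last by rewrite allrel0r.
rewrite andbT allrel1r.
apply/allP => x; rewrite mem_filter mem_iota add0n /= => /andP [bx hx].
rewrite /gap; case: m H H' IH hb hx => // m H H' IH hb hx.
rewrite ltnS leq_eqVlt in hx; case/orP: hx => [/eqP E|//].
rewrite E in bx; by move: (H m (ltnSn _)); rewrite bx hb.
Qed.

Lemma count_mem_iota (s : seq nat) m : uniq s -> all (fun x => x < m)%N s ->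
  perm_eq (filter (fun x => x \in s) (iota 0 m)) s.
Proof.
move=> us ha; apply: uniq_perm => //; first by apply: filter_uniq; apply: iota_uniq.
move=> x; rewrite mem_filter mem_iota add0n /=.
by case hx: (x \in s) => //=; rewrite (allP ha x hx).
Qed.

Lemma bridge (R : realFieldType) (N k : nat) (g : nat -> R) (r : R) :
  (0 < N)%N -> (0 < k)%N ->
  (Ex g (2*N) false false k r \/ Ex g (2*N) true true k r) <->
  exists t : k.-tuple 'I_(2*N), admissible t /\ \sum_(j <- t) g (val j) <= r.
Proof.
move=> hN hk.
have E : (2*N = (2*N).-1.+1)%N by rewrite prednK // muln_gt0.
set M := (2*N).-1.
split.
- move=> H.
  have [b [hi hbnd hc hs]] : exists b, [/\ indep (2*N) b, ~~ (b 0%N && b M),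
      cnt b (2*N) = k & sm g b (2*N) <= r].
    case: H => [[b [hi hx hy hc hs]]|[b [hi hx hy hc hs]]]; exists b; split => //;
      rewrite E /= in hy.
      by rewrite -hy andbF.
    by rewrite (negbTE (hx isT)).
  set s := filter b (iota 0 (2*N)).
  set t0 := [seq j <- enum 'I_(2*N) | b (val j)].
  have ht0 : map val t0 = s by rewrite /t0 /s -val_enum_ord filter_map.
  have hsz : size t0 == k by rewrite -(size_map val) ht0 /s size_filter -hc.
  exists (Tuple hsz); split.
  + rewrite /admissible /= ht0; apply/andP; split.
      have := indep_pairwise hi; rewrite -(sorted_pairwise gap_trans) -/s.
      by [].
    apply/negP => /andP [/eqP h0 /eqP hl].
    have : (0 < size s)%N by rewrite /s size_filter -/(cnt b (2*N)) hc.
    case Es: s h0 hl => [|a s'] //= h0 hl _.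
    have ha : a \in s by rewrite Es mem_head.
    have hl' : last a s' \in s by rewrite Es mem_last.
    rewrite /s mem_filter in ha; rewrite /s mem_filter in hl'.
    case/andP: ha => ha _; case/andP: hl' => hl' _.
    by move: hbnd; rewrite -h0 ha /M -hl hl'.
  + rewrite /= -(big_map val xpredT) ht0 /s big_filter; exact: hs.
case=> t [ha hs].
set s := map val (tval t).
move: ha; rewrite /admissible -/s => /andP [hsorted hnot].
have hp : pairwise gap s by rewrite -(sorted_pairwise gap_trans).
have us : uniq s := pairwise_uniq gap_irr hp.
have hall : all (fun x => x < 2*N)%N s.
  by apply/allP => x; rewrite /s => /mapP [j _ ->]; exact: ltn_ord.
have hsz : size s = k by rewrite size_map size_tuple.
pose b := fun i => i \in s.
have hi : indep (2*N) b.
  move=> i _; apply/negP => /andP [h1 h2].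
  have := pairwise_mem2 hp h1 h2; rewrite /gap.
  rewrite neq_ltn ltnSn /= => /(_ isT) /orP [] ?; lia.
have hc : cnt b (2*N) = k.
  by rewrite /cnt -size_filter (perm_size (count_mem_iota us hall)).
have hsm : sm g b (2*N) = \sum_(j <- t) g (val j).
  by rewrite /sm -big_filter (perm_big _ (count_mem_iota us hall)) big_map.
case hM: (M \in s).
  right; exists b; split => //.
  - move=> _; apply/negP => h0.
    have hall' : all (fun x => x < M.+1)%N s by rewrite -E.
    move: hnot; rewrite (pairwise_head hp h0) (pairwise_last hp hall' hM) /=.
    by rewrite eqxx.
  - by rewrite E /= /b hM.
  - by rewrite hsm.
left; exists b; split => //.
- by rewrite E /= /b hM.
- by rewrite hsm.
Qed.

Section SeqMin.
Variable R : realFieldType.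

Lemma foldr_min_mem (x : R) s : foldr Num.min x s \in x :: s.
Proof.
elim: s => [|y s IH] /=; first by rewrite mem_head.
rewrite minrEle; case: ifP => _; first by rewrite !inE eqxx orbT.
by move: IH; rewrite !inE => /orP [->|->]; rewrite ?orbT.
Qed.

Lemma foldr_min_le (x : R) s y : y \in x :: s -> foldr Num.min x s <= y.
Proof.
elim: s y => [|z s IH] y /=; first by rewrite inE => /eqP ->.
rewrite !inE ge_min => /or3P [/eqP ->|/eqP ->|hy].
- by rewrite (IH _ (mem_head _ _)) orbT.
- by rewrite lexx.
- by rewrite IH ?orbT // inE hy orbT.
Qed.

Lemma seqmin_mem (s : seq R) : s != [::] -> seqmin s \in s.
Proof. by case: s => // x s _; exact: foldr_min_mem. Qed.

Lemma seqmin_le (s : seq R) y : y \in s -> seqmin s <= y.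
Proof. by case: s => // x s; exact: foldr_min_le. Qed.

Lemma seqmin_eq (s : seq R) x : x \in s -> (forall y, y \in s -> x <= y) -> seqmin s = x.
Proof.
move=> hx hl; apply/le_anti; rewrite seqmin_le //=.
by apply: hl; apply: seqmin_mem; case: s hx.
Qed.

Lemma seqmin_has (s1 s2 : seq R) :
  (forall r, has (fun x => x <= r) s1 = has (fun x => x <= r) s2) -> seqmin s1 = seqmin s2.
Proof.
move=> H.
case E1: s1 => [|x1 s1'].
  case E2: s2 => [|x2 s2'] //.
  by have := H x2; rewrite E1 E2 /= lexx.
have ne1 : s1 != [::] by rewrite E1.
rewrite -E1.
have ne2 : s2 != [::].
  apply/eqP => E2; have := H x1; rewrite E1 E2 /= lexx //.
have h1 : has (fun x => x <= seqmin s1) s2 by rewrite -H; apply/hasP; exists (seqmin s1);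
  [exact: seqmin_mem| exact: lexx].
have h2 : has (fun x => x <= seqmin s2) s1 by rewrite H; apply/hasP; exists (seqmin s2);
  [exact: seqmin_mem| exact: lexx].
case/hasP: h1 => y hy hy1; case/hasP: h2 => z hz hz1.
apply/le_anti; rewrite (le_trans (seqmin_le hz) hz1) /=.
exact: (le_trans (seqmin_le hy) hy1).
Qed.
End SeqMin.

Lemma charH (R : realFieldType) (N k : nat) (B : 'I_(2*N) -> R) (r : R) :
  (0 < N)%N -> (0 < k)%N ->
  le_at (\tr (mprod (fun i => Mc (Aat B i.+1)) (2*N))) k r <->
  exists t : k.-tuple 'I_(2*N), admissible t /\ \sum_(j <- t) Aat B (val j).+1 <= r.
Proof.
move=> hN hk.
rewrite -(bridge (fun i => Aat B i.+1)) // tr2 le_atD.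
have h0 := dp (fun i => Aat B i.+1) (2*N) o0 o0 k r.
have h1 := dp (fun i => Aat B i.+1) (2*N) o1 o1 k r.
split.
  by case/orP => [/h0 H|/h1 H]; [left|right].
by case => [/h0 ->|/h1 ->] //; rewrite orbT.
Qed.

Lemma has_H (R : realFieldType) (N k : nat) (B : 'I_(2*N) -> R) (r : R) :
  has (fun x => x <= r)
    [seq \sum_(j <- tval t) Aat B (val j).+1
       | t <- enum [pred t : k.-tuple 'I_(2*N) | admissible t]] <->
  exists t : k.-tuple 'I_(2*N), admissible t /\ \sum_(j <- t) Aat B (val j).+1 <= r.
Proof.
rewrite has_map; split.
  by case/hasP => t; rewrite mem_enum /= => ha hs; exists t.
by case=> t [ha hs]; apply/hasP; exists t; rewrite ?mem_enum.
Qed.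

Section Toda2.
Variable R : realFieldType.
Variables (N : nat) (A : 'I_(2*N) -> R).
Hypothesis hN : (3 <= N)%N.

Definition aa n := Aat A (2 * n)%N.
Definition bb n := Aat A (2 * n).+1.
Definition uu n := seqmin [seq Spart A n k | k <- iota 0 N].

Lemma AatP (f : 'I_(2*N) -> R) i : Aat f (i + 2*N) = Aat f i.
Proof. by rewrite /Aat modnDr. Qed.

Lemma S0 m : Spart A m 0 = 0.
Proof. by rewrite /Spart big_geq. Qed.

Lemma S2 m k : Spart A m.+1 k.+1 = (bb m - aa m) + Spart A m k.
Proof.
rewrite /Spart big_nat_recl //; congr (_ + _).
  have E : (2 * (m.+1 + N - 1) = 2 * m + 2 * N)%N by lia.
  by rewrite E -addSn !AatP.
Qed.

Lemma S3 m : Spart A m N = Spart A m N.-1 + (bb m - aa m).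
Proof.
rewrite /Spart -{1}(prednK (ltn_trans (isT : (0 < 2)%N) hN)).
rewrite big_nat_recr /=; last by lia.
congr (_ + _).
have E : (m + N - N.-1.+1 = m)%N by lia.
by rewrite E.
Qed.

Lemma T_const m : Spart A m N = Spart A 0 N.
Proof.
elim: m => // m IH.
have h2 := S2 m N.-1; rewrite prednK in h2; last lia.
by rewrite h2 -IH (S3 m) addrC.
Qed.

Lemma sum_shift (f : nat -> R) n : f 0%N = f n ->
  \sum_(0 <= l < n) f l.+1 = \sum_(0 <= l < n) f l.
Proof.
move=> H.
have h1 : \sum_(0 <= l < n.+1) f l = f 0%N + \sum_(0 <= l < n) f l.+1.
  by rewrite big_nat_recl.
have h2 : \sum_(0 <= l < n.+1) f l = \sum_(0 <= l < n) f l + f n.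
  by rewrite big_nat_recr.
by move: h1; rewrite h2 H addrC => /addrI.
Qed.

Lemma T_pos :
  \sum_(1 <= l < N.+1) Aat A (2 * l) < \sum_(1 <= l < N.+1) Aat A (2 * l).-1 ->
  0 < Spart A 0 N.
Proof.
move=> hyp.
have ho : \sum_(1 <= l < N.+1) Aat A (2 * l).-1 = \sum_(0 <= l < N) bb l.
  by rewrite big_add1 /=; apply: eq_bigr => l _; rewrite /bb; congr (Aat A _); lia.
have he : \sum_(1 <= l < N.+1) Aat A (2 * l) = \sum_(0 <= l < N) aa l.
  rewrite big_add1 /=; apply: sum_shift.
  by rewrite /aa -(AatP A (2 * 0)) add0n.
have hS : Spart A 0 N = \sum_(0 <= l < N) (bb l - aa l).
  rewrite /Spart big_add1 /= big_nat_rev /=; apply: eq_big_nat => l /andP [_ hl].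
  by rewrite /bb /aa; congr (Aat A _ - Aat A _); lia.
by rewrite hS sumrB subr_gt0 -ho -he.
Qed.

Lemma uu_rec (hT : 0 < Spart A 0 N) m : uu m.+1 = Num.min 0 (bb m - aa m + uu m).
Proof.
have hN0 : (0 < N)%N by lia.
have memU : uu m \in [seq Spart A m k | k <- iota 0 N].
  by apply: seqmin_mem; rewrite -size_eq0 size_map size_iota -lt0n.
case/mapP: memU => j hj Ej.
rewrite mem_iota add0n in hj.
apply: seqmin_eq.
- rewrite minrEle; case: ifP => h.
    by apply/mapP; exists 0%N; [rewrite mem_iota add0n | rewrite S0].
  case: (ltnP j.+1 N) => hj2.
    by apply/mapP; exists j.+1; [rewrite mem_iota add0n | rewrite S2 Ej].
  have Ej2 : j = N.-1 by lia.
  have := S2 m N.-1; rewrite prednK // T_const -Ej2 -Ej => E.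
  by move: h; rewrite -E (ltW hT).
- move=> y /mapP [k hk ->]; rewrite mem_iota add0n in hk.
  case: k hk => [|k] hk; first by rewrite S0 ge_min lexx.
  rewrite S2 ge_min; apply/orP; right; rewrite lerD2l.
  apply: seqmin_le; apply/mapP; exists k => //.
  by rewrite mem_iota add0n; apply: ltnW.
Qed.

Lemma uu_per : uu N = uu 0.
Proof.
rewrite /uu; congr seqmin; apply/eq_in_map => k; rewrite mem_iota add0n => hk.
rewrite /Spart; apply: eq_big_nat => l /andP [h1 h2].
have E1 : (2 * (N + N - l) = 2 * (0 + N - l) + 2 * N)%N by lia.
by rewrite E1 -addSn !AatP.
Qed.

Lemma ww_rec (hT : 0 < Spart A 0 N) m :
  aa m.+1 + - uu m.+1 = aa m.+1 + (aa m + - uu m - Num.min (bb m) (aa m + - uu m)).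
Proof.
rewrite uu_rec // !minrEle; case: ifP => h1; case: ifP => h2; lra.
Qed.

Lemma AatE (f : 'I_(2*N) -> R) i (hi : (i < 2*N)%N) : Aat f i = f (Ordinal hi).
Proof.
rewrite /Aat modn_small //; case: insubP => [j _ Ej|]; last by rewrite hi.
by congr f; apply: val_inj.
Qed.

Lemma Abar_even_at n : (n < N)%N -> Aat (Abar A) (2 * n) = Abar_even A n.
Proof.
move=> hn; have hi : (2 * n < 2 * N)%N by lia.
rewrite (AatE _ hi) /Abar /=.
have -> : odd (2 * n) = false by rewrite oddM.
by have -> : (2 * n)./2 = n by lia.
Qed.

Lemma Abar_odd_at n : (n < N)%N ->
  Aat (Abar A) (2 * n).+1 = Aat A (2 * n).+1 + Aat A (2 * n).+2 - Abar_even A n.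
Proof.
move=> hn; have hi : ((2 * n).+1 < 2 * N)%N by lia.
rewrite (AatE _ hi) /Abar /=.
have -> : odd (2 * n) = false by rewrite oddM.
by have -> : uphalf (2 * n) = n by lia.
Qed.

Lemma step (hT : 0 < Spart A 0 N) n : (n < N)%N ->
  Kv (aa n + - uu n) *m (Mc (Aat A (2 * n).+1) *m Mc (Aat A (2 * n).+2)) =
  (Mc (Aat (Abar A) (2 * n)) *m Mc (Aat (Abar A) (2 * n).+1)) *m Kv (aa n.+1 + - uu n.+1).
Proof.
move=> hn.
have ha : Aat A (2 * n).+2 = aa n.+1 by rewrite /aa; congr (Aat A _); lia.
rewrite Abar_even_at // Abar_odd_at // ha ww_rec //.
exact: local_id.
Qed.

Lemma tr_eq (hT : 0 < Spart A 0 N) :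
  \tr (mprod (fun i => Mc (Aat A i.+1)) (2 * N)) =
  \tr (mprod (fun i => Mc (Aat (Abar A) i.+1)) (2 * N)).
Proof.
rewrite -(mprod_pair (fun i => Mc (Aat A i.+1))).
have hG : (fun i => Mc (Aat (Abar A) i)) (2 * N)%N = (fun i => Mc (Aat (Abar A) i)) 0%N.
  change (Mc (Aat (Abar A) (0 + 2 * N)) = Mc (Aat (Abar A) 0)).
  by rewrite AatP.
transitivity (\tr (mprod (fun i => Mc (Aat (Abar A) i)) (2 * N))); last exact: (tr_rot hG).
rewrite -(mprod_pair (fun i => Mc (Aat (Abar A) i))).
apply: (@tr_intertwine _ (aa 0 + - uu 0)).
have := @telescope _ (fun n => Kv (aa n + - uu n))
   (fun n => Mc (Aat A (2 * n).+1) *m Mc (Aat A (2 * n).+2))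
   (fun n => Mc (Aat (Abar A) (2 * n)) *m Mc (Aat (Abar A) (2 * n).+1)) N.
rewrite uu_per.
have -> : aa N = aa 0 by rewrite /aa -(AatP A (2 * 0)) add0n.
by apply; move=> n hn; apply: step.
Qed.

Lemma sum_pairs (F : nat -> R) m :
  \sum_(0 <= i < 2 * m) F i = \sum_(0 <= n < m) (F (2 * n)%N + F (2 * n).+1).
Proof.
elim: m => [|m IH]; first by rewrite !big_geq.
have E : (2 * m.+1 = (2 * m).+2)%N by lia.
by rewrite E !big_nat_recr //= IH addrA.
Qed.

Lemma sum_Aat (f : 'I_(2 * N) -> R) : \sum_(j < 2 * N) f j = \sum_(0 <= i < 2 * N) Aat f i.
Proof.
rewrite big_mkord; apply: eq_bigr => j _.
by rewrite (AatE _ (ltn_ord j)); congr f; apply: val_inj.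
Qed.

Lemma sum_eq : \sum_(j < 2 * N) Abar A j = \sum_(j < 2 * N) A j.
Proof.
rewrite !sum_Aat sum_pairs.
rewrite (@eq_big_nat _ _ _ 0 N _ (fun n => Aat A (2 * n).+1 + Aat A (2 * n).+2)); last first.
  move=> n /andP [_ hn]; rewrite Abar_even_at // Abar_odd_at //.
  by rewrite addrC subrK.
rewrite -(sum_pairs (fun i => Aat A i.+1)) sum_shift //.
by rewrite -(AatP A 0) add0n.
Qed.
End Toda2.

Theorem mainTheorem3 (R : realFieldType) (N : nat) (hN : (3 <= N)%N)
    (A : 'I_(2*N) -> R) :
  \sum_(1 <= l < N.+1) Aat A (2 * l) < \sum_(1 <= l < N.+1) Aat A (2 * l).-1 ->
  forall k : nat, (1 <= k <= N.+1)%N -> H (Abar A) k = H A k.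
Proof.
move=> hyp k /andP [hk1 hk2].
have hT := T_pos hN hyp.
rewrite /H; case: eqP => [_|Ek]; first exact: sum_eq.
apply: seqmin_has => r.
have hN0 : (0 < N)%N by lia.
have key : forall B : 'I_(2 * N) -> R,
  has (fun x => x <= r)
    [seq \sum_(j <- tval t) Aat B (val j).+1
       | t <- enum [pred t : k.-tuple 'I_(2*N) | admissible t]] =
  le_at (\tr (mprod (fun i => Mc (Aat B i.+1)) (2 * N))) k r.
  move=> B; apply/idP/idP => h.
    apply (proj2 (charH B r hN0 hk1)). apply (proj1 (has_H k B r)). exact h.
  apply (proj2 (has_H k B r)). apply (proj1 (charH B r hN0 hk1)). exact h.
by rewrite !key -(tr_eq hN hT).
Qed.
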